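(* Let $d\ge 1$ and let $\lambda=(\lambda_1,\dots,\lambda_d)$ be a vector of positive integers with $\sum_{i=1}^d\lambda_i=n\ge 2$. For each integer $b$ with $0\le b<n-1$, the point \[ p(b)=\left(\left(\sum_{i=1}^d\left\lceil \frac{b\lambda_i}{n-1}\right\rceil\right)-b,\; \left\lceil \frac{b\lambda_1}{n-1}\right\rceil,\;\dots,\;\left\lceil \frac{b\lambda_d}{n-1}\right\rceil\right)\in\mathbb{Z}^{d+1} \] lies in $\Pi_\lambda$, the points $p(0),\dots,p(n-2)$ are distinct, and every point of $\Pi_\lambda\cap\mathbb{Z}^{d+1}$ is of the form $p(b)$ for some $0\le b<n-1$. That is, $b\mapsto p(b)$ is a bijection from $\{0,1,\dots,n-2\}$ onto $\Pi_\lambda\cap\mathbb{Z}^{d+1}$.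
   Context: $e_1,\dots,e_d$ are the standard basis vectors of $\mathbb{R}^d$, and $\Delta_\lambda=\mathrm{conv}(e_1,\dots,e_d,\lambda)\subset\mathbb{R}^d$. The fundamental parallelepiped of $\Delta_\lambda$ is $\Pi_\lambda=\left\{\sum_{i=1}^d\gamma_i(1,e_i)+\gamma_{d+1}(1,\lambda): 0\le\gamma_i<1 \text{ for all } i\right\}\subset\mathbb{R}^{d+1}$. *)

(* Defs.v *)
From HB Require Import structures.
From mathcomp Require Import all_boot all_order all_algebra.
From mathcomp Require Import reals.
Set Implicit Arguments. Unset Strict Implicit. Unset Printing Implicit Defensive.
Import Order.TTheory GRing.Theory Num.Theory.
Local Open Scope ring_scope.

(* Points of R^{d+1} are row vectors 'rV[R]_(d.+1); coordinate ord0 is the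
   extra "1" coordinate, and coordinate lift ord0 i (i : 'I_d) is the
   (i+1)-th coordinate of R^d. *)

Section Defs.
Variables (R : realType) (d : nat).

Definition lift_e (i : 'I_d) : 'rV[R]_(d.+1) :=
  \row_j (if unlift ord0 j is Some k then (k == i)%:R else 1).

Definition lift_lam (lam : 'I_d -> nat) : 'rV[R]_(d.+1) :=
  \row_j (if unlift ord0 j is Some k then (lam k)%:R else 1).

Definition fund_par (lam : 'I_d -> nat) (x : 'rV[R]_(d.+1)) : Prop :=
  exists gam : 'I_d.+1 -> R,
    (forall j, 0 <= gam j < 1) /\
    x = \sum_(i < d) gam (lift ord_max i) *: lift_e i
        + gam ord_max *: lift_lam lam.

Definition int_pt (z : 'rV[int]_(d.+1)) : 'rV[R]_(d.+1) := map_mx intr z.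

Definition cl (lam : 'I_d -> nat) (b : nat) (i : 'I_d) : int :=
  Num.ceil (((b * lam i)%:R : R) / ((\sum_(k < d) lam k)%N.-1)%:R).

Definition pt (lam : 'I_d -> nat) (b : nat) : 'rV[int]_(d.+1) :=
  \row_j (if unlift ord0 j is Some i then cl lam b i
          else (\sum_(i < d) cl lam b i) - b%:Z).
End Defs.

(* Main.v *)
Require Import Defs.
From HB Require Import structures.
From mathcomp Require Import all_boot all_order all_algebra.
From mathcomp Require Import reals.
From mathcomp Require Import ring lra.
Import Order.TTheory GRing.Theory Num.Theory.
Local Open Scope ring_scope.

Lemma ceil_char (R : realType) (z : int) (y : R) :
  0 <= z%:~R - y < 1 -> Num.ceil y = z.
Proof.
move=> /andP[h1 h2]; apply: ceil_def; rewrite intrB /=; apply/andP; split; lra.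
Qed.

Lemma entry_sum (R : realType) (d : nat) (lam : 'I_d -> nat) (g : 'I_d -> R) (t : R) j :
  (\sum_(i < d) g i *: lift_e R i + t *: lift_lam R lam) 0 j =
  if unlift ord0 j is Some k then g k + t * (lam k)%:R else \sum_(i < d) g i + t.
Proof.
rewrite /lift_e /lift_lam !mxE summxE.
case: (unliftP ord0 j) => [k ->|->]; rewrite ?liftK ?unlift_none /=.
  rewrite (bigD1 k) //= big1 ?addr0; first by rewrite !mxE liftK eqxx mulr1.
  by move=> i /negbTE ik; rewrite !mxE liftK eq_sym ik mulr0.
by rewrite mulr1; congr (_ + _); apply: eq_bigr => i _; rewrite !mxE unlift_none mulr1.
Qed.

Theorem proposition2p12 (R : realType) (d : nat) (lam : 'I_d -> nat) :
  (1 <= d)%N ->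
  (forall i, (0 < lam i)%N) ->
  (2 <= \sum_(i < d) lam i)%N ->
  [/\ (forall b : nat, (b < (\sum_(i < d) lam i).-1)%N ->
          fund_par lam (@int_pt R d (pt R lam b))),
      (forall b1 b2 : nat, (b1 < (\sum_(i < d) lam i).-1)%N ->
          (b2 < (\sum_(i < d) lam i).-1)%N ->
          pt R lam b1 = pt R lam b2 -> b1 = b2)
    & (forall z : 'rV[int]_(d.+1), fund_par lam (@int_pt R d z) ->
          exists2 b : nat, (b < (\sum_(i < d) lam i).-1)%N & z = pt R lam b)].
Proof.
move=> _ _ hn2.
have hn : \sum_(i < d) lam i = ((\sum_(i < d) lam i).-1).+1 by rewrite prednK // (leq_trans _ hn2).
have hN0 : (0 < (\sum_(i < d) lam i).-1)%N by rewrite -ltnS -hn.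
have clE : forall b i, cl R lam b i = Num.ceil (((b * lam i)%:R : R) / ((\sum_(k < d) lam k)%N.-1)%:R) by [].
move: hn hN0 clE; set N := (\sum_(i < d) lam i).-1 => hn hN0 clE.
have hNR : (0 : R) < N%:R by rewrite ltr0n.
have hNR' : (N%:R : R) != 0 by rewrite gt_eqF.
have hnR : ((\sum_(i < d) lam i)%:R : R) = N%:R + 1 by rewrite hn -addn1 natrD.
have hsum : forall b : nat, \sum_(i < d) ((b * lam i)%:R : R) = b%:R * N%:R + b%:R.
  move=> b; rewrite -natr_sum -big_distrr /= hn -addn1 !natrM natrD mulrDr mulr1 //.
split.
- move=> b hb.
  exists (fun j => if unlift ord_max j is Some i then
            ((cl R lam b i)%:~R - (b * lam i)%:R / N%:R) else b%:R / N%:R).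
  split.
    move=> j /=; case: (unliftP ord_max j) => [k _|_] /=.
      rewrite clE; have := ceil_itv (((b * lam k)%:R : R) / N%:R).
      rewrite intrB /= => /andP[h1 h2]; apply/andP; split; lra.
    apply/andP; split; first by apply: divr_ge0.
    by rewrite ltr_pdivrMr // mul1r ltr_nat.
  apply/rowP => j; rewrite entry_sum /int_pt /pt !mxE.
  case: (unliftP ord0 j) => [k _|_]; rewrite ?liftK ?unlift_none /=.
    rewrite natrM; field; exact: hNR'.
  rewrite (eq_bigr (fun i => (cl R lam b i)%:~R - ((b * lam i)%:R : R) / N%:R)); last by move=> i _; rewrite liftK.
  rewrite intrB rmorph_sum /= sumrB -mulr_suml hsum; field; exact: hNR'.
- move=> b1 b2 _ _ H.
  have ecl : forall i, cl R lam b1 i = cl R lam b2 i.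
    by move=> i; have := congr1 (fun m : 'M[int]_(1, d.+1) => m 0 (lift ord0 i)) H; rewrite /= !mxE liftK.
  have := congr1 (fun m : 'M[int]_(1, d.+1) => m 0 ord0) H; rewrite /= !mxE unlift_none.
  rewrite (eq_bigr _ (fun i _ => ecl i)) => /addrI /oppr_inj; by case.
- move=> z [g [hg hz]].
  set t := g ord_max.
  have ek : forall k, ((z 0 (lift ord0 k))%:~R : R) = g (lift ord_max k) + t * (lam k)%:R.
    by move=> k; have := congr1 (fun m : 'M[R]_(1, d.+1) => m 0 (lift ord0 k)) hz; rewrite entry_sum /int_pt !mxE liftK.
  have e0 : ((z 0 ord0)%:~R : R) = \sum_(i < d) g (lift ord_max i) + t.
    by have := congr1 (fun m : 'M[R]_(1, d.+1) => m 0 ord0) hz; rewrite entry_sum /int_pt !mxE unlift_none.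
  set m : int := \sum_(k < d) z 0 (lift ord0 k) - z 0 ord0.
  have em : (m%:~R : R) = t * N%:R.
    rewrite /m intrB rmorph_sum /=; under eq_bigr do rewrite ek.
    rewrite e0 big_split /= -mulr_sumr -natr_sum hnR; ring.
  have ht := hg ord_max; rewrite -/t in ht; move/andP: ht => [ht0 ht1].
  have hm0 : 0 <= m by rewrite -(ler0z R) em; apply: mulr_ge0.
  have [b hb] : exists b : nat, m = b%:Z by exists `|m|%N; rewrite gez0_abs.
  have eb : (b%:R : R) = t * N%:R by rewrite -em hb.
  have hbN : (b < N)%N.
    rewrite -(ltr_nat R) eb; rewrite -ltr_pdivlMr // divff //.
  have hcl : forall k, z 0 (lift ord0 k) = cl R lam b k.
    move=> k; rewrite clE; symmetry; apply: ceil_char.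
    have -> : ((b * lam k)%:R : R) / N%:R = t * (lam k)%:R.
      by rewrite natrM eb; field.
    by rewrite ek addrK; apply: hg.
  exists b => //.
  apply/rowP => j; rewrite /pt !mxE.
  case: (unliftP ord0 j) => [k ->|->]; rewrite ?liftK ?unlift_none /=; first exact: hcl.
  rewrite -(eq_bigr _ (fun i _ => hcl i)) -hb /m; ring.
Qed.
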